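(* Suppose $\alpha_k\in(0,1]$, $k\ge1$, used in procedure $\mathcal{G}_{APL}$ satisfy $\alpha_1=1$ and $\gamma_k(1)\|\Gamma_k(1,\rho)\|_{\frac{2}{1-\rho}}\le ck^{-\frac{1+3\rho}{2}}$ for all $k\ge1$, for some $c>0$. Let $\epsilon>0$, $\beta,\theta\in(0,1)$, $q=1-(1-\theta)\min\{\beta,1-\beta\}$. Then for the APL method: (a) the number of phases does not exceed $\bar S(\epsilon):=\left\lceil\max\left\{0,\log_{1/q}\frac{M\Omega_{\omega,X}^{(1+\rho)/2}}{(1+\rho)\epsilon}\right\}\right\rceil$; (b) the total number of iterations is at most $$\bar S(\epsilon)+\frac{1}{1-q^{\frac{2}{1+3\rho}}}\left(\frac{cM\Omega_{\omega,X}^{\frac{1+\rho}{2}}}{\beta\theta(1+\rho)\epsilon}\right)^{\frac{2}{1+3\rho}}.$$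
   Context: Problem: $f^*=\min_{x\in X}f(x)$, $X\subseteq\mathbb{R}^n$ nonempty convex compact, arbitrary norm $\|\cdot\|$ on $\mathbb{R}^n$; $f:X\to\mathbb{R}$ convex with oracle returning $f(x)$, $f'(x)\in\partial f(x)$ such that for some $M>0$, $\rho\in[0,1]$: $f(y)-f(x)-\langle f'(x),y-x\rangle\le\frac{M}{1+\rho}\|y-x\|^{1+\rho}$ on $X$. $h(z,x):=f(z)+\langle f'(z),x-z\rangle$; $\mathcal{L}_f(l):=\{x\in X:f(x)\le l\}$; a localizer is a convex compact $X'$ with $\mathcal{L}_f(l)\subseteq X'\subseteq X$. $\omega$: differentiable, strongly convex with modulus $\sigma_\omega$ on $X$; $\mathcal{D}^2_{\omega,X}:=\max_{x,z\in X}\{\omega(x)-\omega(z)-\langle\nabla\omega(z),x-z\rangle\}$, $\Omega_{\omega,X}=2\mathcal{D}^2_{\omega,X}/\sigma_\omega$. $\gamma_1(1)=1$, $\gamma_k(1)=(1-\alpha_k)\gamma_{k-1}(1)$; $\Gamma_k(1,\rho)=(\gamma_i(1)^{-1}\alpha_i^{1+\rho})_{i=1}^k$; $\ell_p$ norms, $\frac{2}{1-\rho}=\infty$ if $\rho=1$. Procedure $\mathcal{G}_{APL}(p,\mathrm{lb},\beta,\theta)$: Step 0: $x^u_0=p$, $\overline f_0=f(p)$, $\underline f_0=\mathrm{lb}$, $l=\beta\underline f_0+(1-\beta)\overline f_0$; $x_0\in X$ and initial localizer $X'_0$ (e.g. $x_0=p$, $X'_0=X$); $d_\omega(x)=\omega(x)-[\omega(x_0)+\langle\nabla\omega(x_0),x-x_0\rangle]$;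 $k=1$. Step 1: $x^l_k=(1-\alpha_k)x^u_{k-1}+\alpha_kx_{k-1}$, $\underline h_k=\min_{x\in X'_{k-1}}h(x^l_k,x)$ ($+\infty$ if empty), $\underline f_k=\max\{\underline f_{k-1},\min\{l,\underline h_k\}\}$; if $\underline f_k\ge l-\theta(l-\underline f_0)$ terminate with $p^+=x^u_{k-1}$, $\mathrm{lb}^+=\underline f_k$. Step 2: $x_k=\operatorname{argmin}_{x\in X'_{k-1}}\{d_\omega(x):h(x^l_k,x)\le l\}$. Step 3: $\overline f_k=\min\{\overline f_{k-1},f(\alpha_kx_k+(1-\alpha_k)x^u_{k-1})\}$, $x^u_k$ with $f(x^u_k)=\overline f_k$; if $\overline f_k\le l+\theta(\overline f_0-l)$ terminate with $p^+=x^u_k$, $\mathrm{lb}^+=\underline f_k$. Step 4: closed convex $X'_k$ with $\{x\in X'_{k-1}:h(x^l_k,x)\le l\}\subseteq X'_k\subseteq\{x\in X:\langle\nabla d_\omega(x_k),x-x_k\rangle\ge0\}$. Step 5: $k\leftarrow k+1$, go to Step 1. APL method (input $p_0\in X$, $\epsilon>0$, $\beta,\theta\in(0,1)$): Step 0: $p_1\in\operatorname{Argmin}_{x\in X}h(p_0,x)$, $\mathrm{lb}_1=h(p_0,p_1)$, $\mathrm{ub}_1=f(p_1)$, $s=1$. Step 1: if $\mathrm{ub}_s-\mathrm{lb}_s\le\epsilon$ terminate. Step 2: $(p_{s+1},\mathrm{lb}_{s+1})=\mathcal{G}_{APL}(p_s,\mathrm{lb}_s,\beta,\theta)$, $\mathrm{ub}_{s+1}=f(p_{s+1})$.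 Step 3: $s\leftarrow s+1$, go to Step 1. Each call of the procedure is a phase; iterations are those of the procedure calls. *)

(* Defs.v *)
From mathcomp Require Import all_boot all_order all_algebra.
From mathcomp Require Import all_classical all_reals all_analysis.
Set Implicit Arguments. Unset Strict Implicit. Unset Printing Implicit Defensive.
Import Order.TTheory GRing.Theory Num.Theory numFieldNormedType.Exports.
Local Open Scope ring_scope.
Local Open Scope classical_set_scope.

Section APL.
Context {R : realType} {n : nat}.
Local Notation V := 'rV[R]_n.

Definition dotp (u v : V) : R := \sum_(i < n) u 0 i * v 0 i.

Definition is_norm (nrm : V -> R) : Prop :=
  (forall x, nrm x = 0 -> x = 0) /\
  (forall (a : R) x, nrm (a *: x) = `|a| * nrm x) /\
  (forall x y, nrm (x + y) <= nrm x + nrm y).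

Definition convex_on (A : set V) (F : V -> R) : Prop :=
  forall x y (t : R), A x -> A y -> 0 <= t <= 1 ->
    F (t *: x + (1 - t) *: y) <= t * F x + (1 - t) * F y.

Definition strongly_convex_on (A : set V) (nrm : V -> R) (sigma : R)
  (F : V -> R) : Prop :=
  forall x y (t : R), A x -> A y -> 0 <= t <= 1 ->
    F (t *: x + (1 - t) *: y)
      <= t * F x + (1 - t) * F y - sigma / 2 * t * (1 - t) * (nrm (x - y)) ^+ 2.

Definition subgrad_oracle (A : set V) (f : V -> R) (g : V -> V) : Prop :=
  forall x y, A x -> A y -> f x + dotp (g x) (y - x) <= f y.

Definition holder_cond (A : set V) (f : V -> R) (g : V -> V) (nrm : V -> R)
  (M rho : R) : Prop :=
  forall x y, A x -> A y ->
    f y - f x - dotp (g x) (y - x) <= M / (1 + rho) * (nrm (y - x)) `^ (1 + rho).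

Definition bregman_term (omega : V -> R) (x z : V) : R :=
  omega x - omega z - 'd omega z (x - z).

Definition is_Dsq (A : set V) (omega : V -> R) (D2 : R) : Prop :=
  (exists x z, A x /\ A z /\ bregman_term omega x z = D2) /\
  (forall x z, A x -> A z -> bregman_term omega x z <= D2).

Definition Omega_wX (sigma D2 : R) : R := 2 * D2 / sigma.

Fixpoint gam (alpha : nat -> R) (k : nat) : R :=
  match k with
  | 0 => 1
  | k'.+1 => if k' is 0 then 1 else (1 - alpha k) * gam alpha k'
  end.

(* || Gamma_k(1,rho) ||_{2/(1-rho)}, with 2/(1-rho) = oo when rho = 1 *)
Definition Gamma_entry (alpha : nat -> R) (rho : R) (i : nat) : R :=
  (gam alpha i)^-1 * (alpha i) `^ (1 + rho).

Definition Gamma_norm (alpha : nat -> R) (rho : R) (k : nat) : R :=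
  if rho == 1 then \big[Num.max/0]_(1 <= i < k.+1) `|Gamma_entry alpha rho i|
  else (\sum_(1 <= i < k.+1) `|Gamma_entry alpha rho i| `^ (2 / (1 - rho)))
         `^ ((1 - rho) / 2).

Definition hlin (f : V -> R) (g : V -> V) (z x : V) : R := f z + dotp (g z) (x - z).

Definition localizer (A : set V) (f : V -> R) (l : R) (A' : set V) : Prop :=
  convex_set A' /\ compact A' /\ [set x | A x /\ f x <= l] `<=` A' /\ A' `<=` A.

(* value min{l, underline h} where underline h = min_{x in B} F x (+oo if B empty) *)
Definition min_level_val (B : set V) (F : V -> R) (l m : R) : Prop :=
  (B = set0 /\ m = l) \/
  (exists z, B z /\ (forall y, B y -> F z <= F y) /\ m = Num.min l (F z)).

(* trace of one call of the procedure G_APL *)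
Record ptrace := PTrace {
  xu : nat -> V;
  xx : nat -> V;
  xl : nat -> V;
  fu : nat -> R;
  fl : nat -> R;
  Xp : nat -> set V
}.

Section Procedure.
Variables (X : set V) (f : V -> R) (g : V -> V) (omega : V -> R)
  (alpha : nat -> R) (beta theta : R) (p : V) (lb : R) (t : ptrace).

Definition lev : R := beta * lb + (1 - beta) * f p.

Let h := hlin f g.

Definition d_om (x : V) : R :=
  omega x - (omega (xx t 0) + 'd omega (xx t 0) (x - xx t 0)).

Definition grad_d_om (y v : V) : R := 'd omega y v - 'd omega (xx t 0) v.

Definition G_init : Prop :=
  xu t 0 = p /\ fu t 0 = f p /\ fl t 0 = lb /\ X (xx t 0) /\
  localizer X f lev (Xp t 0).

Definition G_step1 (k : nat) : Prop :=
  xl t k = (1 - alpha k) *: xu t k.-1 + alpha k *: xx t k.-1 /\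
  exists m, min_level_val (Xp t k.-1) (h (xl t k)) lev m /\
            fl t k = Num.max (fl t k.-1) m.

Definition G_term1 (k : nat) : Prop := lev - theta * (lev - fl t 0) <= fl t k.

Definition G_step2 (k : nat) : Prop :=
  Xp t k.-1 (xx t k) /\ h (xl t k) (xx t k) <= lev /\
  forall y, Xp t k.-1 y -> h (xl t k) y <= lev -> d_om (xx t k) <= d_om y.

Definition G_step3 (k : nat) : Prop :=
  let xt := alpha k *: xx t k + (1 - alpha k) *: xu t k.-1 in
  fu t k = Num.min (fu t k.-1) (f xt) /\
  (xu t k = xu t k.-1 \/ xu t k = xt) /\ f (xu t k) = fu t k.

Definition G_term3 (k : nat) : Prop := fu t k <= lev + theta * (fu t 0 - lev).

Definition G_step4 (k : nat) : Prop :=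
  closed (Xp t k) /\ convex_set (Xp t k) /\
  [set x | Xp t k.-1 x /\ h (xl t k) x <= lev] `<=` Xp t k /\
  Xp t k `<=` [set x | X x /\ 0 <= grad_d_om (xx t k) (x - xx t k)].

Definition G_iter_cont (k : nat) : Prop :=
  G_step1 k /\ ~ G_term1 k /\ G_step2 k /\ G_step3 k /\ ~ G_term3 k /\ G_step4 k.

Definition G_iter_last (k : nat) : Prop :=
  G_step1 k /\
  (G_term1 k \/
   (~ G_term1 k /\ G_step2 k /\ G_step3 k /\
    (G_term3 k \/ (~ G_term3 k /\ G_step4 k)))).

(* a (possibly unfinished) run of G_APL(p, lb, beta, theta) in which
   iterations 1..K have been started *)
Definition G_prefix (K : nat) : Prop :=
  G_init /\ (forall k, (1 <= k < K)%N -> G_iter_cont k) /\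
  ((0 < K)%N -> G_iter_last K).

Definition G_done (K : nat) (p' : V) (lb' : R) : Prop :=
  G_init /\ (forall k, (1 <= k < K)%N -> G_iter_cont k) /\ (0 < K)%N /\
  G_step1 K /\
  ((G_term1 K /\ p' = xu t K.-1 /\ lb' = fl t K) \/
   (~ G_term1 K /\ G_step2 K /\ G_step3 K /\ G_term3 K /\
    p' = xu t K /\ lb' = fl t K)).

End Procedure.

(* A (possibly unfinished) run of the APL method in which S phases have been
   started: phases 1..S-1 have terminated, phase S has started K S iterations. *)
Definition APL_prefix (X : set V) (f : V -> R) (g : V -> V) (omega : V -> R)
  (alpha : nat -> R) (beta theta eps : R) (p0 : V)
  (p : nat -> V) (lb ub : nat -> R) (tr : nat -> ptrace) (K : nat -> nat)
  (S : nat) : Prop :=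
  X (p 1%N) /\ (forall y, X y -> hlin f g p0 (p 1%N) <= hlin f g p0 y) /\
  lb 1%N = hlin f g p0 (p 1%N) /\ ub 1%N = f (p 1%N) /\
  (forall s, (1 <= s <= S)%N -> eps < ub s - lb s) /\
  (forall s, (1 <= s < S)%N ->
     G_done X f g omega alpha beta theta (p s) (lb s) (tr s) (K s)
            (p s.+1) (lb s.+1) /\ ub s.+1 = f (p s.+1)) /\
  ((0 < S)%N -> G_prefix X f g omega alpha beta theta (p S) (lb S) (tr S) (K S)).

Definition q_APL (beta theta : R) : R := 1 - (1 - theta) * Num.min beta (1 - beta).

Definition Sbar (M rho Omega eps beta theta : R) : R :=
  (Num.ceil (Num.max 0
     (ln (M * Omega `^ ((1 + rho) / 2) / ((1 + rho) * eps))
      / ln ((q_APL beta theta)^-1))))%:~R.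

Definition iter_bound (M rho Omega eps beta theta c : R) : R :=
  Sbar M rho Omega eps beta theta +
  (1 - (q_APL beta theta) `^ (2 / (1 + 3 * rho)))^-1 *
  (c * M * Omega `^ ((1 + rho) / 2) / (beta * theta * (1 + rho) * eps))
    `^ (2 / (1 + 3 * rho)).

End APL.

(* Main.v *)
Require Import Defs.
From mathcomp Require Import all_boot all_order all_algebra.
From mathcomp Require Import all_classical all_reals all_analysis.
From mathcomp Require Import ring lra zify.
Import Order.TTheory GRing.Theory Num.Theory numFieldNormedType.Exports.
Local Open Scope ring_scope.
Local Open Scope classical_set_scope.


Section Basics.
Context {R : realType} {n : nat}.
Local Notation V := 'rV[R]_n.

Lemma dotpD (u x y : V) : dotp u (x + y) = dotp u x + dotp u y.
Proof. by rewrite /dotp -big_split; apply: eq_bigr => i _; rewrite mxE mulrDr. Qed.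

Lemma dotpZ (u x : V) a : dotp u (a *: x) = a * dotp u x.
Proof. by rewrite /dotp mulr_sumr; apply: eq_bigr => i _; rewrite mxE mulrCA. Qed.

Lemma cvx_comb (X : set V) : convex_set X -> forall x y t, X x -> X y ->
  0 <= t -> t <= 1 -> X (t *: x + (1 - t) *: y).
Proof.
move=> cX x y t Xx Xy t0 t1.
have := cX x y (Itv01 t0 t1).
rewrite !inE => /(_ Xx Xy).
done.
Qed.

Lemma nrm_ge0 (nrm : V -> R) : is_norm nrm -> forall x, 0 <= nrm x.
Proof.
move=> [_ [hZ hD]] x.
have h0 : nrm 0 = 0 by have := hZ 0 0; rewrite scale0r normr0 mul0r.
have := hD x (-x); rewrite subrr h0.
have -> : -x = (-1) *: x by rewrite scaleN1r.
rewrite hZ normrN normr1 mul1r.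
lra.
Qed.

Lemma nrmZ (nrm : V -> R) : is_norm nrm -> forall a x, 0 <= a -> nrm (a *: x) = a * nrm x.
Proof. by move=> [_ [hZ _]] a x a0; rewrite hZ ger0_norm. Qed.

End Basics.


Section H.
Context {R : realType}.
Lemma hoelder_seq (s : seq nat) (a b : nat -> R) (p q : R) :
  (forall i, 0 <= a i) -> (forall i, 0 <= b i) -> 0 < p -> 0 < q -> p^-1 + q^-1 = 1 ->
  \sum_(i <- s) a i * b i <=
  (\sum_(i <- s) a i `^ p) `^ p^-1 * (\sum_(i <- s) b i `^ q) `^ q^-1.
Proof.
move=> a0 b0 p0 q0 pq.
elim: s => [|x s IH].
  by rewrite big_nil; apply: mulr_ge0; exact: powR_ge0.
rewrite !big_cons.
set A := \sum_(i <- s) a i `^ p.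
set B := \sum_(i <- s) b i `^ q.
have A0 : 0 <= A by apply: sumr_ge0 => i _; exact: powR_ge0.
have B0 : 0 <= B by apply: sumr_ge0 => i _; exact: powR_ge0.
apply: (le_trans (lerD (lexx (a x * b x)) IH)).
have := hoelder2 (a0 x) (powR_ge0 A p^-1) (b0 x) (powR_ge0 B q^-1) p0 q0 pq.
by rewrite -!powRrM !mulVf ?gt_eqF // !powRr1.
Qed.

Lemma max_seq (s : seq nat) (a b : nat -> R) :
  (forall i, 0 <= b i) ->
  \sum_(i <- s) a i * b i <=
  (\big[Num.max/0]_(i <- s) `|a i|) * \sum_(i <- s) b i.
Proof.
move=> b0.
elim: s => [|x s IH]; first by rewrite !big_nil mul0r.
rewrite !big_cons.
set m := \big[Num.max/0]_(i <- s) `|a i|.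
have m0 : 0 <= m.
  rewrite /m; elim: s {IH m} => [|y s IH]; first by rewrite big_nil.
  by rewrite big_cons le_max IH orbT.
have B0 : 0 <= \sum_(i <- s) b i by apply: sumr_ge0.
rewrite mulrDr; apply: lerD.
  apply: le_trans (ler_norm _) _; rewrite normrM (ger0_norm (b0 x)).
  by apply: ler_wpM2r => //; rewrite le_max lexx.
apply: le_trans IH _; apply: ler_wpM2r => //; rewrite le_max lexx orbT //.
Qed.
End H.


Lemma breg_lb (R : realType) n (nrm : 'rV[R]_n -> R) (X : set 'rV[R]_n) sigma omega x z :
  strongly_convex_on X nrm sigma omega -> X x -> X z -> differentiable omega z ->
  sigma / 2 * (nrm (x - z)) ^+ 2 <= bregman_term omega x z.
Proof.
move=> sc Xx Xz dz.
set v := x - z.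
have hd : derivable omega z v := diff_derivable dz.
have Hc : (fun h : R => h^-1 *: ((omega \o shift z) (h *: v) - omega z)) @ 0^' --> 'd omega z v.
  rewrite -deriveE //.
pose psi := fun h : R => h^-1 *: ((omega \o shift z) (h *: v) - omega z) - sigma / 2 * h * nrm v ^+ 2.
have Hp : psi @ 0^'+ --> 'd omega z v.
  have -> : 'd omega z v = 'd omega z v - sigma / 2 * 0 * nrm v ^+ 2 by rewrite mulr0 mul0r subr0.
  apply: cvgB.
    apply: cvg_trans; last exact: Hc.
    apply: cvg_app; by apply: within_subset => u /= /gt_eqF ->.
  have Hh : (fun h : R => h) @ 0^'+ --> (0:R).
    by apply: cvg_at_right_filter; exact: cvg_id.
  have H2 := (@cvgMr_tmp _ _ _ _ (fun h => sigma / 2 * h) (sigma/2 * 0) (nrm v ^+ 2) (@cvgMl_tmp _ _ _ _ (fun h => h) (sigma/2) 0 Hh)). exact: H2.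
rewrite /bregman_term -subr_ge0.
have -> : omega x - omega z - 'd omega z (x - z) - sigma / 2 * nrm v ^+ 2 =
   (omega x - omega z - sigma / 2 * nrm v ^+ 2) - 'd omega z v by rewrite /v; ring.
rewrite subr_ge0.
apply: (cvgr_to_le Hp).
near=> h.
have h0 : 0 < h by near: h; exact: nbhs_right_gt.
have h1 : h < 1 by near: h; exact: nbhs_right_lt.
have := sc x z h Xx Xz.
rewrite (ltW h0) (ltW h1) => /(_ isT).
have -> : h *: x + (1 - h) *: z = h *: v + z.
  by rewrite /v scalerBr scalerBl scale1r [RHS]addrAC -addrA.
rewrite /psi /= => H.
rewrite -subr_ge0.
have E : h^-1 *: (omega (h *: v + z) - omega z) = h^-1 * (omega (h *: v + z) - omega z) by [].
rewrite E.
have hn : h != 0 by rewrite gt_eqF.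
set N := nrm v ^+ 2.
set w := omega (h *: v + z) in H *.
have : h^-1 * (w - omega z) <= h^-1 * (h * omega x + (1 - h) * omega z - sigma / 2 * h * (1 - h) * N - omega z).
  by rewrite ler_wpM2l ?invr_ge0 ?(ltW h0) // lerB.
have -> : h^-1 * (h * omega x + (1 - h) * omega z - sigma / 2 * h * (1 - h) * N - omega z)
   = omega x - omega z - sigma / 2 * (1 - h) * N.
  by field.
move=> H'.
rewrite subr_ge0.
lra.
Unshelve. all: end_near.
Qed.


Section Phase.
Context {R : realType} {n : nat}.
Local Notation V := 'rV[R]_n.
Variables (nrm : V -> R) (X : set V) (f : V -> R) (g : V -> V) (M rho : R)
  (omega : V -> R) (sigma D2 : R) (alpha : nat -> R) (beta theta : R).
Hypotheses (Hn : is_norm nrm) (HcX : convex_set X) (Hsg : subgrad_oracle X f g)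
  (HM : 0 < M) (Hrho : 0 <= rho <= 1) (Hh : holder_cond X f g nrm M rho)
  (Hdiff : forall x, X x -> differentiable omega x) (Hsig : 0 < sigma)
  (Hsc : strongly_convex_on X nrm sigma omega) (HD : is_Dsq X omega D2)
  (Halpha : forall k, (1 <= k)%N -> 0 < alpha k <= 1) (Ha1 : alpha 1%N = 1)
  (Hgam : forall k, (1 <= k)%N -> 0 < gam alpha k).
Variables (p : V) (lb : R) (t : @ptrace R n) (K : nat).
Hypotheses (Hinit : G_init X f beta p lb t)
  (Hcont : forall k, (1 <= k < K)%N -> G_iter_cont X f g omega alpha beta theta p lb t k)
  (Hp : X p).

Local Notation l := (lev f beta p lb).

Lemma step3_X k : (1 <= k)%N -> X (xx t k) -> X (xu t k.-1) -> G_step3 f alpha t k ->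
  X (xu t k).
Proof.
move=> k1 Xx Xu [_ [[->|->] _]] //.
have /andP [a0 a1] := Halpha _ k1.
by apply: cvx_comb => //; exact: ltW.
Qed.

Lemma inv_X j : (j == 0)%N || (j < K)%N ->
  X (xx t j) /\ X (xu t j) /\ Xp t j `<=` X.
Proof.
elim: j => [_|j IH /orP [//|jK]].
  case: Hinit => [xu0 [_ [_ [Xx0 [_ [_ [_ sub]]]]]]].
  by split => //; split => //; rewrite xu0.
have [Xx [Xu Xs]] := IH (introT orP (or_intror (ltnW jK))).
have [s1 [nt1 [s2 [s3 [nt3 s4]]]]] := Hcont j.+1 jK.
have Xx1 : X (xx t j.+1) by apply: Xs; exact: s2.1.
split => //; split; first exact: step3_X.
by case: s4 => _ [_ [_ H]] y /H [].
Qed.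

Lemma rec_k k : (1 <= k < K)%N ->
  f (xu t k) - l <= (1 - alpha k) * (f (xu t k.-1) - l) +
     M / (1 + rho) * (alpha k `^ (1 + rho) * nrm (xx t k - xx t k.-1) `^ (1 + rho)).
Proof.
case: k => [//|k] /andP [k1 kK] /=.
have [Xxk [Xuk _]] := @inv_X k.+1 (introT orP (or_intror kK)).
have [Xx' [Xu' Xs']] := @inv_X k (introT orP (or_intror (ltnW kK))).
have [[exl _] [nt1 [s2 [s3 [nt3 s4]]]]] := Hcont _ (introT andP (conj k1 kK)).
have /andP [a0 a1] := Halpha _ k1.
simpl in exl.
set a := alpha k.+1 in exl s3 a0 a1 *.
set yl := Defs.xl t k.+1 in exl s2 *.
set yt := a *: xx t k.+1 + (1 - a) *: xu t k in s3.
have Xyl : X yl.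
  rewrite exl addrC; apply: cvx_comb => //; exact: ltW.
have Xyt : X yt by apply: cvx_comb => //; exact: ltW.
have Hf1 : f (xu t k.+1) <= f yt.
  case: s3 => e1 [_ e2]; rewrite e2 e1 /=.
  by rewrite ge_min lexx orbT.
have H1 := Hh _ _ Xyl Xyt.
have E1 : yt - yl = a *: (xx t k.+1 - xx t k).
  by rewrite /yt exl; apply/rowP => i; rewrite !mxE; ring.
have E2 : yt - yl = a *: (xx t k.+1 - yl) + (1 - a) *: (xu t k - yl).
  by rewrite /yt exl; apply/rowP => i; rewrite !mxE; ring.
rewrite [X in dotp _ X]E2 dotpD !dotpZ E1 (@nrmZ _ _ nrm Hn _ _ (ltW a0)) powRM ?(ltW a0) ?(nrm_ge0 _ Hn) // in H1.
have H3 := Hsg _ _ Xyl Xu'.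
have H4 := s2.2.1; rewrite /hlin in H4.
set D1 := dotp (g yl) (xx t k.+1 - yl) in H1 H4.
set D2' := dotp (g yl) (xu t k - yl) in H1 H3.
have H5 : a * (f yl + D1) <= a * l by apply: ler_wpM2l => //; exact: ltW.
have H6 : (1 - a) * (f yl + D2') <= (1 - a) * f (xu t k) by apply: ler_wpM2l; lra.
lra.
Qed.

Let aux_dinc (om : V -> R) (D0 D1 : {linear V -> R}) (x y x0 : V) (s : R) :
  s <= om x - om y - D1 (x - y) -> 0 <= D1 (x - y) - D0 (x - y) ->
  s <= om x - (om x0 + D0 (x - x0)) - (om y - (om x0 + D0 (y - x0))).
Proof.
rewrite !linearB /=.
set a := D0 x; set b := D0 y; set c := D0 x0.
lra.
Qed.

Lemma dinc k : (1 <= k < K)%N ->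
  sigma / 2 * nrm (xx t k - xx t k.-1) ^+ 2 <=
  d_om omega t (xx t k) - d_om omega t (xx t k.-1).
Proof.
case: k => [//|k] /andP [_ kK] /=.
have [Xxk _] := @inv_X k.+1 (introT orP (or_intror kK)).
have [Xx' [_ Xs']] := @inv_X k (introT orP (or_intror (ltnW kK))).
have [_ [_ [s2 _]]] := Hcont _ (introT andP (conj (isT : (0 < k.+1)%N) kK)).
have Hb := @breg_lb _ _ nrm X sigma omega (xx t k.+1) (xx t k) Hsc Xxk Xx' (Hdiff _ Xx').

have Hg : 0 <= grad_d_om omega t (xx t k) (xx t k.+1 - xx t k).
  case: k kK s2 {Hb Xxk Xx' Xs'} => [|k] kK s2.
    by rewrite /grad_d_om subrr.
  have [_ [_ [_ [_ [_ s4]]]]] := Hcont _ (introT andP (conj (isT : (0 < k.+1)%N) (ltnW kK))).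
  by case: s4 => _ [_ [_ H]]; case: (H _ s2.1).
move: Hb Hg; rewrite /d_om /bregman_term /grad_d_om.
exact: aux_dinc.
Qed.


Lemma d_le k : (k < K)%N -> d_om omega t (xx t k) <= D2.
Proof.
move=> kK.
have [Xxk _] := @inv_X k (introT orP (or_intror kK)).
have [Xx0 _] := @inv_X 0 isT.
have := HD.2 _ _ Xxk Xx0.
by rewrite /d_om /bregman_term opprD addrA.
Qed.

Lemma dsum k : (k < K)%N ->
  sigma / 2 * \sum_(1 <= i < k.+1) nrm (xx t i - xx t i.-1) ^+ 2 <= d_om omega t (xx t k).
Proof.
elim: k => [_|k IH kK].
  by rewrite big_geq // mulr0 /d_om subrr linear0 addr0 subrr.
rewrite big_nat_recr //= mulrDr.
have := IH (ltnW kK).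
have := dinc _ (introT andP (conj (isT : (0 < k.+1)%N) kK)).
simpl.
lra.
Qed.

Lemma sumN2 k : (k < K)%N ->
  \sum_(1 <= i < k.+1) nrm (xx t i - xx t i.-1) ^+ 2 <= Omega_wX sigma D2.
Proof.
move=> kK.
have := dsum _ kK; have := d_le _ kK.
rewrite /Omega_wX ler_pdivlMr //.
lra.
Qed.

Lemma unroll k : (1 <= k < K)%N ->
  (f (xu t k) - l) / gam alpha k <=
  M / (1 + rho) * \sum_(1 <= i < k.+1)
     Gamma_entry alpha rho i * nrm (xx t i - xx t i.-1) `^ (1 + rho).
Proof.
elim: k => [//|k IH] /andP [_ kK].
case: k IH kK => [|k] IH kK.
  rewrite big_nat1 /Gamma_entry /=.
  have := rec_k 1 (introT andP (conj isT kK)).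
  by rewrite /= Ha1 subrr mul0r add0r invr1 mulr1 mul1r.
have IH' := IH (introT andP (conj isT (ltnW kK))).
rewrite big_nat_recr //=.
have := rec_k k.+2 (introT andP (conj isT kK)).
rewrite /=.
have G0 := Hgam _ (isT : (0 < k.+2)%N).
have G0' := Hgam _ (isT : (0 < k.+1)%N).
rewrite /= in G0.
rewrite /Gamma_entry /=.
move: G0 G0' IH'.
set G' := gam alpha k.+1.
set a := alpha k.+2.
set F := f (xu t k.+2) - l.
set F' := f (xu t k.+1) - l.
set S' := \sum_(1 <= i < k.+2) _.
set N := nrm (xx t k.+2 - xx t k.+1) `^ (1 + rho).
set A := a `^ (1 + rho).
set c := M / (1 + rho).
move=> G0 G0' IH' rec.
have a1 : 1 - a != 0.
  apply/negP => /eqP e; move: G0; rewrite e mul0r ltxx //.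
have h1 : F / ((1 - a) * G') <= ((1 - a) * F' + c * (A * N)) / ((1 - a) * G').
  by apply: ler_wpM2r => //; rewrite invr_ge0 ltW.
have h2 : ((1 - a) * F' + c * (A * N)) / ((1 - a) * G') =
   F' / G' + c * (((1 - a) * G')^-1 * A * N).
  by field; rewrite a1 /= gt_eqF.
rewrite h2 in h1.
rewrite mulrDr.
lra.
Qed.

Lemma sum_holder k : (k < K)%N ->
  \sum_(1 <= i < k.+1) Gamma_entry alpha rho i * nrm (xx t i - xx t i.-1) `^ (1 + rho)
  <= Gamma_norm alpha rho k * Omega_wX sigma D2 `^ ((1 + rho) / 2).
Proof.
move=> kK.
have HS := sumN2 _ kK.
set Om := Omega_wX sigma D2 in HS *.
have Om0 : 0 <= Om.
  apply: le_trans HS; apply: sumr_ge0 => i _; exact: sqr_ge0.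
have b0 : forall i, 0 <= nrm (xx t i - xx t i.-1) `^ (1 + rho) by move=> i; exact: powR_ge0.
have N2 : forall i, nrm (xx t i - xx t i.-1) `^ 2 = nrm (xx t i - xx t i.-1) ^+ 2.
  by move=> i; rewrite -[2]/(2%:R) powR_mulrn // (nrm_ge0 _ Hn).
case/andP: Hrho => r0 r1.
rewrite /Gamma_norm.
case: eqP => [r1e|r1n].
  have -> : (1 + rho) / 2 = 1 :> R by rewrite r1e; field.
  rewrite powRr1 //.
  apply: le_trans (max_seq _ _ _ b0) _.
  set m := \big[Num.max/0]_(1 <= i < k.+1) _.
  have m0 : 0 <= m.
    rewrite /m; elim: (index_iota 1 k.+1) => [|y s IH]; first by rewrite big_nil.
    by rewrite big_cons le_max IH orbT.
  apply: ler_wpM2l => //.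
  apply: le_trans HS; rewrite le_eqVlt; apply/orP; left; apply/eqP.
  by apply: eq_bigr => i _; rewrite -N2 r1e.
have rl : rho < 1 by rewrite lt_neqAle r1 andbT; apply/eqP.
have p0 : 0 < 2 / (1 - rho) by apply: divr_gt0 => //; lra.
have q0 : 0 < 2 / (1 + rho) by apply: divr_gt0 => //; lra.
have pq : (2 / (1 - rho))^-1 + (2 / (1 + rho))^-1 = 1.
  by rewrite !invf_div; field.
apply: le_trans (_ : \sum_(1 <= i < k.+1) `|Gamma_entry alpha rho i| *
    nrm (xx t i - xx t i.-1) `^ (1 + rho) <= _).
  apply: ler_sum => i _; apply: ler_wpM2r => //; exact: ler_norm.
apply: le_trans (hoelder_seq _ _ _ _ _ (fun i => normr_ge0 _) b0 p0 q0 pq) _.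
rewrite invf_div.
apply: ler_wpM2l; first exact: powR_ge0.
rewrite invf_div.
have -> : \sum_(1 <= i < k.+1) (nrm (xx t i - xx t i.-1) `^ (1 + rho)) `^ (2 / (1 + rho))
   = \sum_(1 <= i < k.+1) nrm (xx t i - xx t i.-1) ^+ 2.
  apply: eq_bigr => i _; rewrite -powRrM.
  have -> : (1 + rho) * (2 / (1 + rho)) = 2 by field; apply/eqP; lra.
  exact: N2.
apply: ge0_ler_powR => //.
- apply: divr_ge0 => //; lra.
- by rewrite nnegrE; apply: sumr_ge0 => i _; exact: sqr_ge0.
Qed.

Variable (c : R).
Hypothesis Hck : forall k, (1 <= k)%N ->
     gam alpha k * Gamma_norm alpha rho k <= c * k%:R `^ (- ((1 + 3 * rho) / 2)).

Lemma fval k : (1 <= k < K)%N ->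
  f (xu t k) - l <= M / (1 + rho) * Omega_wX sigma D2 `^ ((1 + rho) / 2) *
     (c * k%:R `^ (- ((1 + 3 * rho) / 2))).
Proof.
move=> /andP [k1 kK].
have U := unroll _ (introT andP (conj k1 kK)).
have S := sum_holder _ kK.
have G0 := Hgam _ k1.
have C := Hck _ k1.
case/andP: Hrho => r0 r1.
have c0 : 0 <= M / (1 + rho) by apply: divr_ge0; [exact: ltW | lra].
have Oe : 0 <= Omega_wX sigma D2 `^ ((1 + rho) / 2) by exact: powR_ge0.
move: U S C.
set F := f (xu t k) - l.
set G := gam alpha k.
set Sm := \sum_(1 <= i < k.+1) _.
set Gn := Gamma_norm alpha rho k.
set Om := Omega_wX sigma D2 `^ ((1 + rho) / 2).
set ck := c * _.
set c1 := M / (1 + rho) in c0 *.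
move=> U S C.
rewrite ler_pdivrMr // in U.
have h1 : c1 * Sm <= c1 * (Gn * Om) by apply: ler_wpM2l.
have h2 : c1 * Sm * G <= c1 * (Gn * Om) * G by apply: ler_wpM2r => //; exact: ltW.
have h3 : c1 * Om * (G * Gn) <= c1 * Om * ck by apply: ler_wpM2l => //; exact: mulr_ge0.
have e : c1 * (Gn * Om) * G = c1 * Om * (G * Gn) by ring.
lra.
Qed.

Lemma nonterm k : (1 <= k < K)%N ->
  theta * (beta * (f p - lb)) < f (xu t k) - l.
Proof.
move=> /andP [k1 kK].
have [_ [_ [_ [s3 [nt3 _]]]]] := Hcont _ (introT andP (conj k1 kK)).
case: Hinit => [_ [fu0 _]].
have e3 : f (xu t k) = fu t k by case: s3 => _ [_ ->].
move: nt3; rewrite /G_term3 fu0 -e3 /lev.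
move/negP; rewrite -ltNge.
lra.
Qed.

Lemma iter_count : 0 < f p - lb -> 0 < beta -> 0 < theta -> 0 < c ->
  K%:R <= 1 + (c * M * Omega_wX sigma D2 `^ ((1 + rho) / 2) /
               (beta * theta * (1 + rho) * (f p - lb))) `^ (2 / (1 + 3 * rho)).
Proof.
move=> D0 b0 th0 c0.
case/andP: Hrho => r0 r1.
set B := (c * M * _ / _).
have Oe : 0 <= Omega_wX sigma D2 `^ ((1 + rho) / 2) by exact: powR_ge0.
have B0 : 0 <= B.
  rewrite /B; apply: divr_ge0; last by rewrite !mulr_ge0 //; try lra; exact: ltW.
  by rewrite !mulr_ge0 //; exact: ltW.
case: (leqP K 1) => hK.
  apply: le_trans (_ : 1 <= _); first by rewrite (_ : 1 = 1%:R :> R) // ler_nat.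
  by rewrite lerDl powR_ge0.
set k := K.-1.
have kk : (1 <= k < K)%N by rewrite /k; apply/andP; split; lia.
have eK : K%:R = k%:R + 1 :> R.
  by rewrite natr1; congr (_%:R); rewrite /k; lia.
have H1 := fval _ kk.
have H2 := nonterm _ kk.
have kpos : 0 < k%:R :> R by rewrite ltr0n; case/andP: kk.
set e := (1 + 3 * rho) / 2 in H1.
have e0 : 0 < e by rewrite /e; lra.
set y := k%:R `^ e.
have y0 : 0 < y by exact: powR_gt0.
rewrite powRN -/y in H1.
set C0 := M / (1 + rho) * _ in H1.
have hy : y < B.
  have h3 : theta * (beta * (f p - lb)) < C0 * (c * y^-1) by lra.
  have h4 : theta * (beta * (f p - lb)) * y < C0 * c.
    have -> : C0 * c = C0 * (c * y^-1) * y by field; rewrite gt_eqF.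
    by rewrite ltr_pM2r.
  have -> : B = C0 * c / (theta * (beta * (f p - lb))).
    rewrite /B /C0; field.
    by rewrite !gt_eqF //; lra.
  rewrite ltr_pdivlMr; last by rewrite !mulr_gt0.
  lra.
have hk : k%:R = y `^ (2 / (1 + 3 * rho)).
  rewrite /y -powRrM.
  have -> : e * (2 / (1 + 3 * rho)) = 1 by rewrite /e; field; lra.
  by rewrite powRr1 // ltW.
have := gt0_ltr_powR (_ : 0 < 2 / (1 + 3 * rho)) (ltW y0 : y \in Num.nneg) (B0 : B \in Num.nneg) hy.
rewrite -hk.
move=> hh.
rewrite eK.
have a0 : 0 < 2 / (1 + 3 * rho) by apply: divr_gt0; lra.
have := hh a0; lra.
Qed.

End Phase.


Section Gap.
Context {R : realType} {n : nat}.
Local Notation V := 'rV[R]_n.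
Variables (X : set V) (f : V -> R) (g : V -> V) (omega : V -> R) (alpha : nat -> R) (beta theta : R).
Hypotheses (HcX : convex_set X)
  (Halpha : forall k, (1 <= k)%N -> 0 < alpha k <= 1)
  (Hb : 0 < beta < 1) (Ht : 0 < theta < 1).
Variables (p : V) (lb : R) (t : @ptrace R n) (K : nat) (p' : V) (lb' : R).
Hypotheses (Hd : G_done X f g omega alpha beta theta p lb t K p' lb') (Hp : X p).

Lemma inv_all j : (j == 0)%N || (j < K)%N ->
  X (xx t j) /\ X (xu t j) /\ Xp t j `<=` X /\ fu t j <= f p /\ f (xu t j) = fu t j
    /\ lb <= fl t j.
Proof.
case: Hd => [Hinit [Hcont _]].
elim: j => [_|j IH /orP [//|jK]].
  case: Hinit => [xu0 [fu0 [fl0 [Xx0 [_ [_ [_ sub]]]]]]].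
  by rewrite xu0 fu0 fl0; do !split => //.
have [Xx [Xu [Xs [fuj [fxj flj]]]]] := IH (introT orP (or_intror (ltnW jK))).
have [s1 [nt1 [s2 [s3 [nt3 s4]]]]] := Hcont j.+1 jK.
have Xx1 : X (xx t j.+1) by apply: Xs; exact: s2.1.
split => //; split; [|split; [|split; [|split]]].
- apply: (@step3_X _ _ X f alpha HcX Halpha t) => //.
- by case: s4 => _ [_ [_ H]] y /H [].
- case: s3 => e1 _; rewrite e1 /=; by rewrite ge_min fuj.
- by case: s3 => _ [_ ->].
- case: s1 => _ [m [_ ->]] /=; by rewrite le_max flj.
Qed.


Lemma gap_done : 0 <= f p - lb ->
  X p' /\ f p' - lb' <= q_APL beta theta * (f p - lb).
Proof.
move=> D0.
have Hd' := Hd.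
case: Hd' => [Hinit [Hcont [K0 [s1K H]]]].
have KK : (K.-1 < K)%N by rewrite ltn_predL.
have IK := inv_all K.-1 (introT orP (or_intror KK)).
have [Xx [Xu [Xs [fuj [fxj flj]]]]] := IK.
case: Hinit => [_ [fu0 [fl0 _]]].
set mn := Num.min beta (1 - beta).
have m1 : mn <= beta by rewrite ge_min lexx.
have m2 : mn <= 1 - beta by rewrite ge_min lexx orbT.
case/andP: Hb => b0 b1; case/andP: Ht => t0 t1.
have c0 : 0 <= (1 - theta) * (f p - lb) by apply: mulr_ge0 => //; lra.
have h1 : mn * ((1 - theta) * (f p - lb)) <= beta * ((1 - theta) * (f p - lb)) by apply: ler_wpM2r.
have h2 : mn * ((1 - theta) * (f p - lb)) <= (1 - beta) * ((1 - theta) * (f p - lb)) by apply: ler_wpM2r.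
rewrite /q_APL -/mn.
case: H => [[T1 [ep el]] | [nT1 [s2 [s3 [T3 [ep el]]]]]].
  rewrite ep; split => //.
  move: T1; rewrite /G_term1 /lev fl0 -el fxj => T1.
  lra.
have XK : X (xx t K) by apply: Xs; exact: s2.1.
have XuK : X (xu t K).
  exact: (@step3_X _ _ X f alpha HcX Halpha t K K0 XK Xu s3).
rewrite ep; split => //.
have fK : f (xu t K) = fu t K by case: s3 => _ [_ ->].
have flK : fl t K.-1 <= fl t K by case: s1K => _ [m [_ ->]]; rewrite le_max lexx.
move: T3; rewrite /G_term3 /lev fu0 -fK -ep => T3.
lra.
Qed.
End Gap.

Lemma gap1 {R : realType} {n : nat} (nrm : 'rV[R]_n -> R) (X : set 'rV[R]_n) f g (M rho : R)
  omega (sigma D2 : R) (p0 p1 : 'rV[R]_n) :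
  is_norm nrm -> 0 < M -> 0 <= rho <= 1 -> holder_cond X f g nrm M rho ->
  (forall x, X x -> differentiable omega x) -> 0 < sigma ->
  strongly_convex_on X nrm sigma omega -> is_Dsq X omega D2 -> X p0 -> X p1 ->
  f p1 - hlin f g p0 p1 <= M / (1 + rho) * Omega_wX sigma D2 `^ ((1 + rho) / 2).
Proof.
move=> Hn HM /andP [r0 r1] Hh Hdiff Hsig Hsc HD X0 X1.
have H := Hh _ _ X0 X1.
have Hb := @breg_lb _ _ nrm X sigma omega p1 p0 Hsc X1 X0 (Hdiff _ X0).
have Hd := HD.2 _ _ X1 X0.
set N := nrm (p1 - p0) in H Hb.
have N0 : 0 <= N by exact: nrm_ge0.
have N2 : N ^+ 2 <= Omega_wX sigma D2.
  rewrite /Omega_wX ler_pdivlMr //.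
  lra.
have eN : N `^ (1 + rho) = (N ^+ 2) `^ ((1 + rho) / 2).
  rewrite -[2]/(2%:R) -powR_mulrn // -powRrM.
  by congr (_ `^ _); field.
rewrite eN in H.
have : (N ^+ 2) `^ ((1 + rho) / 2) <= Omega_wX sigma D2 `^ ((1 + rho) / 2).
  apply: ge0_ler_powR => //.
  - apply: divr_ge0 => //; lra.
  - by rewrite nnegrE sqr_ge0.
  - by rewrite nnegrE; apply: le_trans N2; exact: sqr_ge0.
move=> hP.
have c0 : 0 <= M / (1 + rho) by apply: divr_ge0; [exact: ltW | lra].
have := ler_wpM2l c0 hP.
rewrite /hlin.
lra.
Qed.


Section Arith.
Context {R : realType}.

Lemma chain (D : nat -> R) (q : R) (S : nat) : 0 <= q ->
  (forall s, (1 <= s < S)%N -> D s.+1 <= q * D s) ->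
  forall s j, (1 <= s)%N -> (s + j <= S)%N -> D (s + j)%N <= q ^+ j * D s.
Proof.
move=> q0 HD s j s1; elim: j => [|j IH] sj.
  by rewrite addn0 expr0 mul1r.
have h : D (s + j)%N <= q ^+ j * D s by apply: IH; lia.
rewrite addnS.
apply: le_trans (HD (s + j)%N _) _.
  apply/andP; split; lia.
by rewrite exprS -mulrA; apply: ler_wpM2l.
Qed.


Lemma countA (D : nat -> R) (q eps G0 : R) (S : nat) : 0 < q < 1 -> 0 < eps ->
  (forall s, (1 <= s <= S)%N -> eps < D s) ->
  (forall s, (1 <= s < S)%N -> D s.+1 <= q * D s) ->
  ((1 <= S)%N -> D 1%N <= G0) ->
  (S%:R : R) <= (Num.ceil (Num.max 0 (ln (G0 / eps) / ln q^-1)))%:~R.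
Proof.
move=> /andP [q0 q1] e0 He Hs H1.
set L := ln (G0 / eps) / ln q^-1.
case: S He Hs H1 => [|S] He Hs H1.
  rewrite ler0z ceil_ge0; apply: lt_le_trans (_ : -1 < 0) _; first by rewrite ltrN10.
  by rewrite le_max lexx.
have hc := @chain D q S.+1 (ltW q0) Hs 1%N S isT (leqnn S.+1).
have hS := He S.+1 (leqnn _).
have hG := H1 isT.
rewrite add1n in hc.
have qS : 0 < q ^+ S by exact: exprn_gt0.
have hh : eps < q ^+ S * G0.
  apply: lt_le_trans hS _; apply: le_trans hc _; apply: ler_wpM2l => //; exact: ltW.
have G0p : 0 < G0.
  have : 0 < q ^+ S * G0 by exact: lt_trans hh.
  by rewrite pmulr_rgt0.
have lq : 0 < ln q^-1 by apply: ln_gt0; rewrite invf_gt1.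
have hL : S%:R < L.
  rewrite /L ltr_pdivlMr // lnV ?posrE // ln_div ?posrE //.
  have := hh; rewrite -(ltr_ln (e0 : eps \in Num.pos)) ?posrE ?mulr_gt0 //.
  rewrite lnM ?posrE // lnXn //.
  rewrite -mulr_natl.
  lra.
have hM : S%:R < Num.max 0 L by rewrite lt_max hL orbT.
have : (S%:Z < Num.ceil (Num.max 0 L))%R by rewrite ceil_gt_int.
rewrite -lezD1 => h.
rewrite -natr1.
have -> : S%:R + 1 = ((S%:Z + 1)%:~R : R) by rewrite intrD.
by rewrite ler_int.
Qed.

Lemma geo (r : R) (S : nat) : 0 <= r -> r < 1 ->
  \sum_(1 <= s < S.+1) r ^+ (S - s) <= (1 - r)^-1.
Proof.
move=> r0 r1.
have i0 : 0 < 1 - r by lra.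
elim: S => [|S IH].
  by rewrite big_geq // invr_ge0 ltW.
rewrite big_nat_recr //= subnn expr0.
have -> : \sum_(1 <= s < S.+1) r ^+ (S.+1 - s) = r * \sum_(1 <= s < S.+1) r ^+ (S - s).
  rewrite mulr_sumr; apply: eq_big_nat => s /andP [s1 s2].
  by rewrite subSn // exprS.
have h : r * \sum_(1 <= s < S.+1) r ^+ (S - s) <= r * (1 - r)^-1 by apply: ler_wpM2l.
have -> : (1 - r)^-1 = r * (1 - r)^-1 + 1 by field; rewrite gt_eqF.
lra.
Qed.

Lemma countB (D : nat -> R) (Kn : nat -> nat) (q eps C a : R) (S : nat) :
  0 < q < 1 -> 0 < eps -> 0 < a -> 0 <= C ->
  (forall s, (1 <= s <= S)%N -> eps < D s) ->
  (forall s, (1 <= s < S)%N -> D s.+1 <= q * D s) ->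
  (forall s, (1 <= s <= S)%N -> (Kn s)%:R <= 1 + (C / D s) `^ a) ->
  \sum_(1 <= s < S.+1) ((Kn s)%:R : R) <= S%:R + (1 - q `^ a)^-1 * (C / eps) `^ a.
Proof.
move=> /andP [q0 q1] e0 a0 C0 He Hs HK.
set r := q `^ a.
have r0 : 0 <= r by exact: powR_ge0.
have r1 : r < 1.
  have := gt0_ltr_powR a0 (ltW q0 : q \in Num.nneg) (ler01 : (1:R) \in Num.nneg) q1.
  by rewrite powR1.
set B := (C / eps) `^ a.
have B0 : 0 <= B by exact: powR_ge0.
have step : forall s, (1 <= s <= S)%N -> (Kn s)%:R <= 1 + B * r ^+ (S - s).
  move=> s /andP [s1 sS].
  apply: le_trans (HK s (introT andP (conj s1 sS))) _.
  rewrite lerD2l.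
  have sj : (s + (S - s) <= S)%N by rewrite subnKC.
  have hc := @chain D q S (ltW q0) Hs s (S - s) s1 sj.
  rewrite subnKC // in hc.
  have hS := He S (introT andP (conj (leq_trans s1 sS) (leqnn S))).
  have Ds : 0 < D s := lt_trans e0 (He s (introT andP (conj s1 sS))).
  set j := (S - s)%N in hc *.
  have qj : 0 <= q ^+ j by apply: exprn_ge0; exact: ltW.
  have hb : C / D s <= C / eps * q ^+ j.
    have h2 : 1 <= q ^+ j * D s / eps by rewrite ler_pdivlMr // mul1r; lra.
    rewrite ler_pdivrMr //.
    have -> : C / eps * q ^+ j * D s = C * (q ^+ j * D s / eps).
      by field; rewrite gt_eqF.
    rewrite -[X in X <= _]mulr1.
    exact: ler_wpM2l.
  apply: le_trans (ge0_ler_powR (ltW a0) _ _ hb) _.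
  - by rewrite nnegrE divr_ge0 // ltW.
  - by rewrite nnegrE mulr_ge0 // divr_ge0 // ltW.
  rewrite powRM ?divr_ge0 // ?(ltW e0) // -/B.
  rewrite -powR_mulrn ?(ltW q0) // powRAC powR_mulrn //.
apply: le_trans (_ : \sum_(1 <= s < S.+1) (1 + B * r ^+ (S - s)) <= _).
  by apply: ler_sum_nat => s hs; apply: step.
rewrite big_split /= sumr_const_nat subn1 /= -mulr_sumr.
rewrite lerD2l mulrC.
apply: ler_wpM2r => //.
exact: geo.
Qed.
End Arith.


Theorem theorem3p5 (R : realType) (n : nat)
  (nrm : 'rV[R]_n -> R) (X : set 'rV[R]_n)
  (f : 'rV[R]_n -> R) (g : 'rV[R]_n -> 'rV[R]_n) (M rho : R)
  (omega : 'rV[R]_n -> R) (sigma D2 : R)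
  (alpha : nat -> R) (c eps beta theta : R) (p0 : 'rV[R]_n) :
  is_norm nrm ->
  X !=set0 -> convex_set X -> compact X ->
  convex_on X f -> subgrad_oracle X f g ->
  0 < M -> 0 <= rho <= 1 -> holder_cond X f g nrm M rho ->
  (forall x, X x -> differentiable omega x) ->
  0 < sigma -> strongly_convex_on X nrm sigma omega ->
  is_Dsq X omega D2 ->
  (forall k, (1 <= k)%N -> 0 < alpha k <= 1) -> alpha 1%N = 1 ->
  0 < c ->
  (forall k, (1 <= k)%N ->
     0 < gam alpha k /\
     gam alpha k * Gamma_norm alpha rho k <= c * k%:R `^ (- ((1 + 3 * rho) / 2))) ->
  0 < eps -> 0 < beta < 1 -> 0 < theta < 1 ->
  X p0 ->
  forall (p : nat -> 'rV[R]_n) (lb ub : nat -> R) (tr : nat -> ptrace)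
         (K : nat -> nat) (S : nat),
  APL_prefix X f g omega alpha beta theta eps p0 p lb ub tr K S ->
  S%:R <= Sbar M rho (Omega_wX sigma D2) eps beta theta /\
  (\sum_(1 <= s < S.+1) K s)%:R
    <= iter_bound M rho (Omega_wX sigma D2) eps beta theta c.
Proof.
move=> Hn Xne HcX Hcomp Hcvx Hsg HM Hrho Hh Hdiff Hsig Hsc HD Halpha Ha1 Hc0 Hck'
  He0 Hb Ht Xp0 p lb ub tr K S HA.
have Hgam : forall k, (1 <= k)%N -> 0 < gam alpha k := fun k hk => (Hck' k hk).1.
have Hck := fun k hk => (Hck' k hk).2.
case: HA => [X1 [hmin [lb1 [ub1 [Heps [Hst Hlast]]]]]].
set Om := Omega_wX sigma D2.
set D := fun s => ub s - lb s.
case/andP: Hrho => r0 r1.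
case/andP: Hb => b0 b1; case/andP: Ht => t0 t1.
have q01 : 0 < q_APL beta theta < 1.
  rewrite /q_APL; set mn := Num.min beta (1 - beta).
  have m0 : 0 < mn by rewrite lt_min b0 /=; lra.
  have m1 : mn <= beta by rewrite ge_min lexx.
  have h : 0 < (1 - theta) * mn by apply: mulr_gt0 => //; lra.
  have h' : (1 - theta) * mn <= (1 - theta) * beta by apply: ler_wpM2l => //; lra.
  have h'' : (1 - theta) * beta < 1 by nra.
  apply/andP; split; lra.
have GD := @gap_done R n X f g omega alpha beta theta HcX Halpha (introT andP (conj b0 b1)) (introT andP (conj t0 t1)).
have HI : forall s, (1 <= s <= S)%N -> X (p s) /\ ub s = f (p s).
  elim => [//|s IH] /andP [_ sS].
  case: s IH sS => [|s] IH sS; first by split.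
  have [Xs us] := IH (introT andP (conj isT (ltnW sS))).
  have [Hd us1] := Hst s.+1 (introT andP (conj isT sS)).
  have De := Heps s.+1 (introT andP (conj isT (ltnW sS))).
  rewrite us in De.
  have [] := GD _ _ _ _ _ _ Hd Xs _.
    lra.
  by move=> Xs2 _; split.
have Hdec : forall s, (1 <= s < S)%N -> D s.+1 <= q_APL beta theta * D s.
  move=> s /andP [s1 sS].
  have [Xs us] := HI s (introT andP (conj s1 (ltnW sS))).
  have [Hd us1] := Hst s (introT andP (conj s1 sS)).
  have De := Heps s (introT andP (conj s1 (ltnW sS))).
  rewrite us in De.
  have [_ h] := GD _ _ _ _ _ _ Hd Xs (ltW (lt_trans He0 De)).
  by rewrite /D us us1.
have HeD : forall s, (1 <= s <= S)%N -> eps < D s by exact: Heps.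
set G0 := M / (1 + rho) * Om `^ ((1 + rho) / 2).
have HD1 : (1 <= S)%N -> D 1%N <= G0.
  move=> _; rewrite /D ub1 lb1.
  exact: (@gap1 R n nrm X f g M rho omega sigma D2 p0 (p 1%N) Hn HM (introT andP (conj r0 r1)) Hh Hdiff Hsig Hsc HD Xp0 X1).
set C := c * M * Om `^ ((1 + rho) / 2) / (beta * theta * (1 + rho)).
have IC := @iter_count R n nrm X f g M rho omega sigma D2 alpha beta theta Hn HcX Hsg HM
   (introT andP (conj r0 r1)) Hh Hdiff Hsig Hsc HD Halpha Ha1 Hgam.
have HK : forall s, (1 <= s <= S)%N -> (K s)%:R <= 1 + (C / D s) `^ (2 / (1 + 3 * rho)).
  move=> s /andP [s1 sS].
  have [Xs us] := HI s (introT andP (conj s1 sS)).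
  have De := Heps s (introT andP (conj s1 sS)).
  have Dp : 0 < f (p s) - lb s by rewrite -us; exact: lt_trans He0 De.
  have [Hinit Hcont] : G_init X f beta (p s) (lb s) (tr s) /\
      (forall k, (1 <= k < K s)%N -> G_iter_cont X f g omega alpha beta theta (p s) (lb s) (tr s) k).
    move: sS; rewrite leq_eqVlt => /orP [/eqP e|sS].
      have S0 : (0 < S)%N by rewrite -e.
      by rewrite e; case: (Hlast S0) => [Hi [Hc _]]; split.
    by case: (Hst s (introT andP (conj s1 sS))) => [[Hi [Hc _]] _]; split.
  have := IC _ _ _ _ Hinit Hcont Xs c Hck Dp b0 t0 Hc0.
  have -> : c * M * Om `^ ((1 + rho) / 2) / (beta * theta * (1 + rho) * (f (p s) - lb s))
     = C / D s.
    rewrite /C /D us; field.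
    by rewrite !gt_eqF //; lra.
  done.
have Sa := @countA R D (q_APL beta theta) eps G0 S q01 He0 HeD Hdec HD1.
have HSbar : S%:R <= Sbar M rho Om eps beta theta.
  rewrite /Sbar.
  have -> : M * Om `^ ((1 + rho) / 2) / ((1 + rho) * eps) = G0 / eps.
    by rewrite /G0; field; rewrite !gt_eqF //; lra.
  exact: Sa.
split => //.
rewrite natr_sum.
have a0 : 0 < 2 / (1 + 3 * rho) by apply: divr_gt0; lra.
have C0 : 0 <= C.
  rewrite /C; apply: divr_ge0.
    by apply: mulr_ge0; [apply: mulr_ge0; exact: ltW | exact: powR_ge0].
  by apply: mulr_ge0; [apply: mulr_ge0; exact: ltW | lra].
have B := @countB R D K (q_APL beta theta) eps C _ S q01 He0 a0 C0 HeD Hdec HK.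
apply: le_trans B _.
rewrite /iter_bound.
have -> : c * M * Om `^ ((1 + rho) / 2) / (beta * theta * (1 + rho) * eps) = C / eps.
  by rewrite /C; field; rewrite !gt_eqF //; lra.
by rewrite lerD2r.
Qed.
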